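(* Let $\mathbb K$ be a field with $2\in\mathbb K^\times$ and $A$ a unital commutative associative $\mathbb K$-algebra with unit $\mathbf 1$. The linear map $\gamma_A:\Lambda^2(A)\to\Omega^1(A)$, $a\wedge b\mapsto a\,d_A(b)-b\,d_A(a)$, is surjective and $\ker\gamma_A=T_0(A)$.
   Context: $(\Omega^1(A),d_A)$ is the universal differential module of $A$: $\Omega^1(A)$ is an $A$-module and $d_A:A\to\Omega^1(A)$ a derivation such that every derivation into an $A$-module factors uniquely through an $A$-module map. $T_0(A)$ is the linear span of $ab\wedge c+bc\wedge a+ca\wedge b-abc\wedge\mathbf 1$ for $a,b,c\in A$. *)

(* Defs.v *)
From HB Require Import structures.
From mathcomp Require Import all_boot all_order all_algebra.
Set Implicit Arguments. Unset Strict Implicit. Unset Printing Implicit Defensive.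
Import GRing.Theory.
Local Open Scope ring_scope.

Definition klinear (K : fieldType) (U V : lmodType K) (f : U -> V) : Prop :=
  forall (k : K) (x y : U), f (k *: x + y) = k *: f x + f y.

Definition alt_bilinear (K : fieldType) (U M : lmodType K) (f : U -> U -> M) : Prop :=
  (forall b, klinear (fun a => f a b)) /\ (forall a, klinear (f a)) /\ (forall a, f a a = 0).

Definition is_ext_square (K : fieldType) (U L : lmodType K) (w : U -> U -> L) : Prop :=
  alt_bilinear w /\
  forall (M : lmodType K) (f : U -> U -> M), alt_bilinear f ->
    (exists g : L -> M, klinear g /\ forall a b, g (w a b) = f a b) /\
    (forall g1 g2 : L -> M, klinear g1 -> klinear g2 ->
       (forall a b, g1 (w a b) = f a b) -> (forall a b, g2 (w a b) = f a b) ->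
       forall x, g1 x = g2 x).

Definition Alinear (A : comNzRingType) (M N : lmodType A) (f : M -> N) : Prop :=
  forall (a : A) (x y : M), f (a *: x + y) = a *: f x + f y.

(* K-derivation of the K-algebra A into the A-module M
   (M is a K-module through k |-> k%:A). *)
Definition is_derivation (K : fieldType) (A : comAlgType K) (M : lmodType A)
    (D : A -> M) : Prop :=
  (forall (k : K) (a b : A), D (k *: a + b) = (k%:A) *: D a + D b) /\
  (forall a b : A, D (a * b) = a *: D b + b *: D a).

Definition is_univ_diff (K : fieldType) (A : comAlgType K) (Om : lmodType A)
    (d : A -> Om) : Prop :=
  is_derivation d /\
  forall (M : lmodType A) (D : A -> M), is_derivation D ->
    (exists f : Om -> M, Alinear f /\ forall a, f (d a) = D a) /\
    (forall f1 f2 : Om -> M, Alinear f1 -> Alinear f2 ->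
       (forall a, f1 (d a) = D a) -> (forall a, f2 (d a) = D a) ->
       forall x, f1 x = f2 x).

Definition T0gen (K : fieldType) (A : comAlgType K) (L : lmodType K)
    (w : A -> A -> L) (a b c : A) : L :=
  w (a * b) c + w (b * c) a + w (c * a) b - w (a * b * c) 1.

Definition in_T0 (K : fieldType) (A : comAlgType K) (L : lmodType K)
    (w : A -> A -> L) (x : L) : Prop :=
  exists s : seq (K * (A * A * A)),
    x = \sum_(t <- s) t.1 *: T0gen w t.2.1.1 t.2.1.2 t.2.2.

(* Main.v *)
Require Import Defs.
From HB Require Import structures.
From mathcomp Require Import all_boot all_order all_algebra.
From mathcomp Require Import ring.
From Stdlib Require Import ClassicalEpsilon.
Set Implicit Arguments. Unset Strict Implicit. Unset Printing Implicit Defensive.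
Import GRing.Theory.
Local Open Scope ring_scope.

Inductive mexp (R : Type) : Type :=
| MAt of nat | MZ | MAdd of mexp R & mexp R | MOpp of mexp R | MSc of R & mexp R.

Fixpoint meval (R : pzRingType) (V : lmodType R) (env : seq V) (e : mexp R) : V :=
  match e with
  | MAt i => nth 0 env i
  | MZ => 0
  | MAdd a b => meval env a + meval env b
  | MOpp a => - meval env a
  | MSc r a => r *: meval env a
  end.

Fixpoint mcoef (R : pzRingType) (e : mexp R) (i : nat) : R :=
  match e with
  | MAt j => if Nat.eqb j i then 1 else 0
  | MZ => 0
  | MAdd a b => mcoef a i + mcoef b i
  | MOpp a => - mcoef a i
  | MSc r a => r * mcoef a i
  end.

Lemma meval_sum (R : pzRingType) (V : lmodType R) (env : seq V) (e : mexp R) :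
  meval env e = \sum_(i < size env) mcoef e i *: nth 0 env i.
Proof.
elim: e => [j||a IHa b IHb|a IHa|r a IHa] /=.
- case: (ltnP j (size env)) => Hj.
    rewrite (bigD1 (Ordinal Hj)) //= PeanoNat.Nat.eqb_refl scale1r big1 ?addr0 //.
    move=> i /eqP Hi; case: PeanoNat.Nat.eqb_spec => [E|_]; last by rewrite scale0r.
    by case: Hi; apply: val_inj; rewrite /= E.
  rewrite nth_default // big1 // => i _.
  case: PeanoNat.Nat.eqb_spec => [E|_]; last by rewrite scale0r.
  by move: (ltn_ord i); rewrite -E ltnNge Hj.
- by rewrite big1 // => i _; rewrite scale0r.
- by rewrite IHa IHb -big_split; apply: eq_bigr => i _; rewrite scalerDl.
- by rewrite IHa -sumrN; apply: eq_bigr => i _; rewrite scaleNr.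
- by rewrite IHa scaler_sumr; apply: eq_bigr => i _; rewrite scalerA.
Qed.

Lemma msound (R : pzRingType) (V : lmodType R) (env : seq V) (e1 e2 : mexp R) :
  map (mcoef e1) (iota 0 (size env)) = map (mcoef e2) (iota 0 (size env)) ->
  meval env e1 = meval env e2.
Proof.
move=> H; rewrite !meval_sum; apply: eq_bigr => i _; congr (_ *: _).
have := congr1 (fun s => nth 0 s i) H.
by rewrite !(nth_map 0) ?size_iota // nth_iota.
Qed.

Lemma cons_eq (T : Type) (x y : T) (l l' : seq T) : x = y -> l = l' -> x :: l = y :: l'.
Proof. by move=> -> ->. Qed.

Ltac mem_atom x l :=
  lazymatch l with
  | nil => constr:(false)
  | cons x _ => constr:(true)
  | cons _ ?l' => mem_atom x l'
  end.

Ltac add_atom t l :=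
  let b := mem_atom t l in
  lazymatch b with true => l | false => constr:(t :: l) end.

Ltac collect t l :=
  lazymatch t with
  | @GRing.add _ ?a ?b => let l := collect a l in collect b l
  | @GRing.opp _ ?a => collect a l
  | @GRing.scale _ _ _ ?a => collect a l
  | @GRing.zero _ => l
  | _ => add_atom t l
  end.

Ltac index t l :=
  lazymatch l with
  | cons t _ => constr:(O)
  | cons _ ?l' => let n := index t l' in constr:(S n)
  end.

Ltac reify R t l :=
  lazymatch t with
  | @GRing.add _ ?a ?b => let x := reify R a l in let y := reify R b l in constr:(@MAdd R x y)
  | @GRing.opp _ ?a => let x := reify R a l in constr:(@MOpp R x)
  | @GRing.scale _ _ ?r ?a => let x := reify R a l in constr:(@MSc R r x)
  | @GRing.zero _ => constr:(@MZ R)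
  | _ => let i := index t l in constr:(@MAt R i)
  end.

Ltac modsolve R tac :=
  lazymatch goal with |- ?lhs = ?rhs =>
    let T := type of lhs in
    let l := collect lhs (@nil T) in
    let l := collect rhs l in
    let e1 := reify R lhs l in
    let e2 := reify R rhs l in
    change (meval l e1 = meval l e2); apply: msound; cbn;
    repeat (apply: cons_eq; [tac tt |]); try reflexivity
  end.


Definition pb (P : Prop) : bool := if excluded_middle_informative P then true else false.
Lemma pbP (P : Prop) : reflect P (pb P).
Proof. by rewrite /pb; case: excluded_middle_informative => H; constructor. Qed.

Definition span (R : pzRingType) (V : lmodType R) (X : Type) (g : X -> V) (v : V) : Prop :=
  exists s : seq (R * X), v = \sum_(t <- s) t.1 *: g t.2.

Lemma span0 (R : pzRingType) (V : lmodType R) (X : Type) (g : X -> V) : span g 0.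
Proof. by exists [::]; rewrite big_nil. Qed.

Lemma spanD (R : pzRingType) (V : lmodType R) (X : Type) (g : X -> V) x y :
  span g x -> span g y -> span g (x + y).
Proof. by move=> [s ->] [s' ->]; exists (s ++ s'); rewrite big_cat. Qed.

Lemma spanZ (R : pzRingType) (V : lmodType R) (X : Type) (g : X -> V) k x :
  span g x -> span g (k *: x).
Proof.
move=> [s ->]; exists [seq (k * t.1, t.2) | t <- s].
by rewrite big_map scaler_sumr; apply: eq_bigr => t _; rewrite scalerA.
Qed.

Lemma spanN (R : pzRingType) (V : lmodType R) (X : Type) (g : X -> V) x :
  span g x -> span g (- x).
Proof. by move=> H; rewrite -scaleN1r; apply: spanZ. Qed.

Lemma spanB (R : pzRingType) (V : lmodType R) (X : Type) (g : X -> V) x y :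
  span g x -> span g y -> span g (x - y).
Proof. by move=> Hx Hy; apply: spanD => //; apply: spanN. Qed.

Lemma span_gen (R : pzRingType) (V : lmodType R) (X : Type) (g : X -> V) t :
  span g (g t).
Proof. by exists [:: (1, t)]; rewrite big_cons big_nil addr0 scale1r. Qed.

Lemma span_eq (R : pzRingType) (V : lmodType R) (X : Type) (g : X -> V) x y :
  x = y -> span g y -> span g x.
Proof. by move=> ->. Qed.

Definition cpred (R : pzRingType) (V : lmodType R) (X : Type) (g : X -> V) (x : V) : pred V :=
  fun y => pb (span g (x - y)).

Lemma cex (R : pzRingType) (V : lmodType R) (X : Type) (g : X -> V) (x : V) :
  exists y, cpred g x y.
Proof. by exists x; apply/pbP; rewrite subrr; apply: span0. Qed.

Definition canon (R : pzRingType) (V : lmodType R) (X : Type) (g : X -> V) (x : V) : V :=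
  xchoose (cex g x).

Lemma canonP (R : pzRingType) (V : lmodType R) (X : Type) (g : X -> V) (x : V) :
  span g (canon g x - x).
Proof.
have /pbP H := xchooseP (cex g x).
by rewrite -opprB; apply: spanN.
Qed.

Lemma canon_eq (R : pzRingType) (V : lmodType R) (X : Type) (g : X -> V) (x y : V) :
  span g (x - y) -> canon g x = canon g y.
Proof.
move=> H; apply: eq_xchoose => z; rewrite /cpred.
apply/pbP/pbP => Hz.
  by apply: (span_eq (y := (x - z) - (x - y))); [rewrite opprB [RHS]addrC addrA subrK | apply: spanB].
by apply: (span_eq (y := (x - y) + (y - z))) => //; [rewrite [RHS]addrA subrK | apply: spanD].
Qed.

Lemma canon_idem (R : pzRingType) (V : lmodType R) (X : Type) (g : X -> V) (x : V) :
  canon g (canon g x) = canon g x.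
Proof. by apply: canon_eq; apply: canonP. Qed.

Definition quot (R : pzRingType) (V : lmodType R) (X : Type) (g : X -> V) :=
  {x : V | canon g x == x}.

HB.instance Definition _ (R : pzRingType) (V : lmodType R) (X : Type) (g : X -> V) :=
  Choice.on (quot g).

Definition qpi (R : pzRingType) (V : lmodType R) (X : Type) (g : X -> V) (x : V) : quot g :=
  exist _ (canon g x) (introT eqP (canon_idem g x)).

Lemma qpiK (R : pzRingType) (V : lmodType R) (X : Type) (g : X -> V) (q : quot g) :
  qpi g (sval q) = q.
Proof. by case: q => x Hx; apply: val_inj => /=; apply/eqP. Qed.

Lemma qpi_surj (R : pzRingType) (V : lmodType R) (X : Type) (g : X -> V) (q : quot g) :
  exists x, q = qpi g x.
Proof. by exists (sval q); rewrite qpiK. Qed.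

Lemma qpi_eq (R : pzRingType) (V : lmodType R) (X : Type) (g : X -> V) x y :
  span g (x - y) -> qpi g x = qpi g y.
Proof. by move=> H; apply: val_inj => /=; apply: canon_eq. Qed.

Lemma qpi_eqP (R : pzRingType) (V : lmodType R) (X : Type) (g : X -> V) x y :
  qpi g x = qpi g y -> span g (x - y).
Proof.
move=> /(congr1 sval) /= E.
apply: (span_eq (y := - (canon g x - x) + (canon g y - y))); last first.
  by apply: spanD; [apply: spanN|]; apply: canonP.
by rewrite E opprB addrA subrK.
Qed.

Lemma qvalP (R : pzRingType) (V : lmodType R) (X : Type) (g : X -> V) x :
  span g (sval (qpi g x) - x).
Proof. exact: canonP. Qed.

Definition qzero (R : pzRingType) (V : lmodType R) (X : Type) (g : X -> V) : quot g := qpi g 0.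
Definition qopp (R : pzRingType) (V : lmodType R) (X : Type) (g : X -> V) (q : quot g) : quot g :=
  qpi g (- sval q).
Definition qadd (R : pzRingType) (V : lmodType R) (X : Type) (g : X -> V) (q r : quot g) : quot g :=
  qpi g (sval q + sval r).
Definition qscale (R : pzRingType) (V : lmodType R) (X : Type) (g : X -> V) (k : R) (q : quot g) :
  quot g := qpi g (k *: sval q).

Lemma qaddE (R : pzRingType) (V : lmodType R) (X : Type) (g : X -> V) x y :
  qadd (qpi g x) (qpi g y) = qpi g (x + y).
Proof.
apply: qpi_eq.
apply: (span_eq (y := (sval (qpi g x) - x) + (sval (qpi g y) - y))); last by apply: spanD; apply: qvalP.
by rewrite opprD addrACA.
Qed.

Lemma qoppE (R : pzRingType) (V : lmodType R) (X : Type) (g : X -> V) x :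
  qopp (qpi g x) = qpi g (- x).
Proof.
apply: qpi_eq.
apply: (span_eq (y := - (sval (qpi g x) - x))); last by apply: spanN; apply: qvalP.
by rewrite [RHS]opprD.
Qed.

Lemma qscaleE (R : pzRingType) (V : lmodType R) (X : Type) (g : X -> V) k x :
  qscale k (qpi g x) = qpi g (k *: x).
Proof.
apply: qpi_eq.
apply: (span_eq (y := k *: (sval (qpi g x) - x))); last by apply: spanZ; apply: qvalP.
by rewrite scalerBr.
Qed.

Lemma qaddA (R : pzRingType) (V : lmodType R) (X : Type) (g : X -> V) :
  associative (@qadd R V X g).
Proof.
move=> q r s; case: (qpi_surj q) => x ->; case: (qpi_surj r) => y ->; case: (qpi_surj s) => z ->.
by rewrite !qaddE addrA.
Qed.

Lemma qaddC (R : pzRingType) (V : lmodType R) (X : Type) (g : X -> V) :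
  commutative (@qadd R V X g).
Proof.
move=> q r; case: (qpi_surj q) => x ->; case: (qpi_surj r) => y ->.
by rewrite !qaddE addrC.
Qed.

Lemma qadd0 (R : pzRingType) (V : lmodType R) (X : Type) (g : X -> V) :
  left_id (qzero g) (@qadd R V X g).
Proof. by move=> q; case: (qpi_surj q) => x ->; rewrite /qzero qaddE add0r. Qed.

Lemma qaddN (R : pzRingType) (V : lmodType R) (X : Type) (g : X -> V) :
  left_inverse (qzero g) (@qopp R V X g) (@qadd R V X g).
Proof. by move=> q; case: (qpi_surj q) => x ->; rewrite qoppE qaddE addNr. Qed.

HB.instance Definition _ (R : pzRingType) (V : lmodType R) (X : Type) (g : X -> V) :=
  GRing.isZmodule.Build (quot g) (@qaddA R V X g) (@qaddC R V X g) (@qadd0 R V X g) (@qaddN R V X g).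

Lemma qpiD (R : pzRingType) (V : lmodType R) (X : Type) (g : X -> V) x y :
  qpi g (x + y) = qpi g x + qpi g y.
Proof. by rewrite -qaddE. Qed.

Lemma qscaleA (R : pzRingType) (V : lmodType R) (X : Type) (g : X -> V) a b (q : quot g) :
  qscale a (qscale b q) = qscale (a * b) q.
Proof. by case: (qpi_surj q) => x ->; rewrite !qscaleE scalerA. Qed.

Lemma qscale1 (R : pzRingType) (V : lmodType R) (X : Type) (g : X -> V) :
  left_id 1 (@qscale R V X g).
Proof. by move=> q; case: (qpi_surj q) => x ->; rewrite qscaleE scale1r. Qed.

Lemma qscaleDr (R : pzRingType) (V : lmodType R) (X : Type) (g : X -> V) :
  right_distributive (@qscale R V X g) +%R.
Proof.
move=> a q r; case: (qpi_surj q) => x ->; case: (qpi_surj r) => y ->.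
by rewrite -qpiD !qscaleE -qpiD scalerDr.
Qed.

Lemma qscaleDl (R : pzRingType) (V : lmodType R) (X : Type) (g : X -> V) (q : quot g) :
  {morph (@qscale R V X g)^~ q : a b / a + b}.
Proof.
move=> a b; case: (qpi_surj q) => x ->.
by rewrite !qscaleE -qpiD scalerDl.
Qed.

HB.instance Definition _ (R : pzRingType) (V : lmodType R) (X : Type) (g : X -> V) :=
  GRing.Zmodule_isLmodule.Build R (quot g) (@qscaleA R V X g) (@qscale1 R V X g)
    (@qscaleDr R V X g) (@qscaleDl R V X g).


Lemma qpiZ (R : pzRingType) (V : lmodType R) (X : Type) (g : X -> V) k x :
  qpi g (k *: x) = k *: qpi g x.
Proof. by rewrite -qscaleE. Qed.

Lemma qpi0 (R : pzRingType) (V : lmodType R) (X : Type) (g : X -> V) :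
  qpi g 0 = 0.
Proof. by []. Qed.

Definition glin (R : pzRingType) (U V : lmodType R) (f : U -> V) : Prop :=
  forall (k : R) (x y : U), f (k *: x + y) = k *: f x + f y.

Lemma gl0 (R : pzRingType) (U V : lmodType R) (f : U -> V) : glin f -> f 0 = 0.
Proof.
move=> H; have := H 1 0 0; rewrite scaler0 add0r scale1r.
by move/(congr1 (fun v => v - f 0)); rewrite subrr addrK => <-.
Qed.

Lemma glD (R : pzRingType) (U V : lmodType R) (f : U -> V) : glin f ->
  forall x y, f (x + y) = f x + f y.
Proof. by move=> H x y; have := H 1 x y; rewrite !scale1r. Qed.

Lemma glZ (R : pzRingType) (U V : lmodType R) (f : U -> V) : glin f ->
  forall k x, f (k *: x) = k *: f x.
Proof. by move=> H k x; have := H k x 0; rewrite !addr0 (gl0 H) addr0. Qed.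

Lemma glN (R : pzRingType) (U V : lmodType R) (f : U -> V) : glin f ->
  forall x, f (- x) = - f x.
Proof. by move=> H x; rewrite -scaleN1r glZ // scaleN1r. Qed.

Lemma glB (R : pzRingType) (U V : lmodType R) (f : U -> V) : glin f ->
  forall x y, f (x - y) = f x - f y.
Proof. by move=> H x y; rewrite glD // glN. Qed.

Lemma glsum (R : pzRingType) (U V : lmodType R) (f : U -> V) (I : Type) (s : seq I) (F : I -> U) :
  glin f -> f (\sum_(t <- s) F t) = \sum_(t <- s) f (F t).
Proof.
move=> H; elim: s => [|t s IH]; first by rewrite !big_nil gl0.
by rewrite !big_cons glD // IH.
Qed.

Lemma glspan (R : pzRingType) (U V : lmodType R) (f : U -> V) (X : Type) (g : X -> U) (x : U) :
  glin f -> (forall t, f (g t) = 0) -> span g x -> f x = 0.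
Proof.
move=> H H0 [s ->]; rewrite glsum // big1 // => t _.
by rewrite glZ // H0 scaler0.
Qed.

Lemma glspan_map (R : pzRingType) (U V : lmodType R) (f : U -> V) (X Y : Type)
  (g : X -> U) (h : Y -> V) (x : U) :
  glin f -> (forall t, span h (f (g t))) -> span g x -> span h (f x).
Proof.
move=> H H0 [s ->]; rewrite glsum //.
elim: s => [|t s IH]; first by rewrite big_nil; apply: span0.
by rewrite big_cons; apply: spanD => //; rewrite glZ //; apply: spanZ.
Qed.

Lemma ext_uniq (K : fieldType) (U L : lmodType K) (w : U -> U -> L) :
  is_ext_square w -> forall (M : lmodType K) (g1 g2 : L -> M), klinear g1 -> klinear g2 ->
  (forall a b, g1 (w a b) = g2 (w a b)) -> forall x, g1 x = g2 x.
Proof.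
move=> [[Hl [Hr Hd]] Hu] M g1 g2 H1 H2 E.
have Hf : alt_bilinear (fun a b => g1 (w a b)).
  split; [|split].
  - by move=> b k x y; rewrite (Hl b) (glD H1) (glZ H1).
  - by move=> a k x y; rewrite (Hr a) (glD H1) (glZ H1).
  - by move=> a; rewrite Hd (gl0 H1).
have [_ U1] := Hu M _ Hf.
by apply: U1 => // a b; rewrite E.
Qed.

Lemma ext_ex (K : fieldType) (U L : lmodType K) (w : U -> U -> L) :
  is_ext_square w -> forall (M : lmodType K) (f : U -> U -> M), alt_bilinear f ->
  exists g : L -> M, klinear g /\ forall a b, g (w a b) = f a b.
Proof. by move=> [_ Hu] M f Hf; have [] := Hu M f Hf. Qed.

Lemma wlin_l (K : fieldType) (U L : lmodType K) (w : U -> U -> L) :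
  is_ext_square w -> forall b, glin (fun a => w a b).
Proof. by move=> [[Hl _] _]. Qed.

Lemma wlin_r (K : fieldType) (U L : lmodType K) (w : U -> U -> L) :
  is_ext_square w -> forall a, glin (w a).
Proof. by move=> [[_ [Hr _]] _]. Qed.

Lemma wanti (K : fieldType) (U L : lmodType K) (w : U -> U -> L) :
  is_ext_square w -> forall a b, w a b = - w b a.
Proof.
move=> HL a b; have [[_ [_ Hd]] _] := HL.
have := Hd (a + b).
rewrite (glD (wlin_l HL (a + b))) !(glD (wlin_r HL _)) !Hd add0r addr0.
by move/eqP; rewrite addr_eq0 => /eqP.
Qed.

Definition restrK (K : fieldType) (A : comAlgType K) (M : lmodType A) : Type := M.

HB.instance Definition _ (K : fieldType) (A : comAlgType K) (M : lmodType A) :=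
  GRing.Zmodule.on (restrK M).

Definition rscale (K : fieldType) (A : comAlgType K) (M : lmodType A) (k : K) (m : restrK M) :
  restrK M := (k%:A : A) *: (m : M).

Lemma rscaleA (K : fieldType) (A : comAlgType K) (M : lmodType A) a b (v : restrK M) :
  rscale a (rscale b v) = rscale (a * b) v.
Proof. rewrite /rscale; have -> := @scalerA A M (a%:A) (b%:A) v. by rewrite -scalerAl mul1r scalerA. Qed.

Lemma rscale1 (K : fieldType) (A : comAlgType K) (M : lmodType A) :
  left_id 1 (@rscale K A M).
Proof. by move=> v; rewrite /rscale scale1r scale1r. Qed.

Lemma rscaleDr (K : fieldType) (A : comAlgType K) (M : lmodType A) :
  right_distributive (@rscale K A M) +%R.
Proof. by move=> a u v; rewrite /rscale scalerDr. Qed.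

Lemma rscaleDl (K : fieldType) (A : comAlgType K) (M : lmodType A) (v : restrK M) :
  {morph (@rscale K A M)^~ v : a b / a + b}.
Proof. by move=> a b; rewrite /rscale scalerDl scalerDl. Qed.

HB.instance Definition _ (K : fieldType) (A : comAlgType K) (M : lmodType A) :=
  GRing.Zmodule_isLmodule.Build K (restrK M) (@rscaleA K A M) (@rscale1 K A M)
    (@rscaleDr K A M) (@rscaleDl K A M).

Lemma dlin (K : fieldType) (A : comAlgType K) (Om : lmodType A) (d : A -> Om) :
  is_derivation d -> glin (d : A -> restrK Om).
Proof. by move=> [H _]. Qed.

Lemma d1 (K : fieldType) (A : comAlgType K) (Om : lmodType A) (d : A -> Om) :
  is_derivation d -> d 1 = 0.
Proof.
move=> [_ H]; have := H 1 1; rewrite mulr1 scale1r.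
by move/(congr1 (fun v => v - d 1)); rewrite subrr addrK => <-.
Qed.

Lemma univ_uniq (K : fieldType) (A : comAlgType K) (Om : lmodType A) (d : A -> Om) :
  is_univ_diff d -> forall (M : lmodType A) (f1 f2 : Om -> M), Alinear f1 -> Alinear f2 ->
  (forall a, f1 (d a) = f2 (d a)) -> forall x, f1 x = f2 x.
Proof.
move=> [[Hl HM] Hu] M f1 f2 H1 H2 E.
have HD : is_derivation (fun a => f1 (d a)).
  split=> [k a b|a b]; first by rewrite Hl H1.
  by rewrite HM (glD H1) !(glZ H1).
have [_ U] := Hu M _ HD.
by apply: U => // a; rewrite E.
Qed.

Ltac wnorm1 w Hanti x rest :=
  lazymatch rest with
  | nil => idtac
  | cons ?y ?r =>
    let E := fresh "E" in
    first [ (have E : y = x by (apply: (f_equal2 w); ring)); rewrite E; clear E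
          | (have E : y = - x by (rewrite [LHS]Hanti; apply: f_equal; apply: (f_equal2 w); ring));
              rewrite E; clear E
          | idtac ]; wnorm1 w Hanti x r
  end.

Ltac wnorm w Hanti l :=
  lazymatch l with
  | nil => idtac
  | cons ?x ?r => wnorm1 w Hanti x r; wnorm w Hanti r
  end.

Ltac wprep w Hanti :=
  lazymatch goal with |- ?lhs = ?rhs =>
    let T := type of lhs in
    let l := collect lhs (@nil T) in
    let l := collect rhs l in
    wnorm w Hanti l
  end.

Definition half (K : fieldType) : K := (2%:R)^-1.

Definition T0g (K : fieldType) (A : comAlgType K) (L : lmodType K) (w : A -> A -> L)
  (t : A * A * A) : L := T0gen w t.1.1 t.1.2 t.2.

Lemma wDl (K : fieldType) (A : comAlgType K) (L : lmodType K) (w : A -> A -> L) :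
  is_ext_square w -> forall a b c, w (a + b) c = w a c + w b c.
Proof. by move=> HL a b c; apply: (glD (wlin_l HL c)). Qed.
Lemma wDr (K : fieldType) (A : comAlgType K) (L : lmodType K) (w : A -> A -> L) :
  is_ext_square w -> forall a b c, w c (a + b) = w c a + w c b.
Proof. by move=> HL a b c; apply: (glD (wlin_r HL c)). Qed.
Lemma wZl (K : fieldType) (A : comAlgType K) (L : lmodType K) (w : A -> A -> L) :
  is_ext_square w -> forall (k : K) a c, w (k *: a) c = k *: w a c.
Proof. by move=> HL k a c; apply: (glZ (wlin_l HL c)). Qed.
Lemma wZr (K : fieldType) (A : comAlgType K) (L : lmodType K) (w : A -> A -> L) :
  is_ext_square w -> forall (k : K) a c, w c (k *: a) = k *: w c a.
Proof. by move=> HL k a c; apply: (glZ (wlin_r HL c)). Qed.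
Lemma wNl (K : fieldType) (A : comAlgType K) (L : lmodType K) (w : A -> A -> L) :
  is_ext_square w -> forall a c, w (- a) c = - w a c.
Proof. by move=> HL a c; apply: (glN (wlin_l HL c)). Qed.
Lemma wNr (K : fieldType) (A : comAlgType K) (L : lmodType K) (w : A -> A -> L) :
  is_ext_square w -> forall a c, w c (- a) = - w c a.
Proof. by move=> HL a c; apply: (glN (wlin_r HL c)). Qed.

Definition mu_spec (K : fieldType) (A : comAlgType K) (L : lmodType K) (w : A -> A -> L)
  (a : A) (g : L -> L) : Prop :=
  klinear g /\ forall b c, g (w b c) = half K *: (w (a * b) c + w b (a * c)).

Definition mu (K : fieldType) (A : comAlgType K) (L : lmodType K) (w : A -> A -> L)
  (a : A) : L -> L := epsilon (inhabits (fun x : L => x)) (mu_spec w a).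

Lemma mu_ok (K : fieldType) (A : comAlgType K) (L : lmodType K) (w : A -> A -> L) :
  is_ext_square w -> forall a, mu_spec w a (mu w a).
Proof.
move=> HL a; apply: epsilon_spec.
have wA := wanti HL.
apply: (ext_ex HL); split; [|split].
- move=> c k x y /=.
  rewrite mulrDr -scalerAr !(wDl HL) !(wZl HL).
  wprep w wA; modsolve K ltac:(fun _ => ring).
- move=> c k x y /=.
  rewrite mulrDr -scalerAr !(wDr HL) !(wZr HL).
  wprep w wA; modsolve K ltac:(fun _ => ring).
- move=> b /=; rewrite (wA (a * b)).
  wprep w wA; modsolve K ltac:(fun _ => ring).
Qed.

Lemma mu_lin (K : fieldType) (A : comAlgType K) (L : lmodType K) (w : A -> A -> L) :
  is_ext_square w -> forall a, klinear (mu w a).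
Proof. by move=> HL a; have [] := mu_ok HL a. Qed.

Lemma mu_w (K : fieldType) (A : comAlgType K) (L : lmodType K) (w : A -> A -> L) :
  is_ext_square w -> forall a b c, mu w a (w b c) = half K *: (w (a * b) c + w b (a * c)).
Proof. by move=> HL a; have [] := mu_ok HL a. Qed.

Lemma mu_T0gen (K : fieldType) (A : comAlgType K) (L : lmodType K) (w : A -> A -> L) :
  is_ext_square w -> forall a x y z, span (T0g w) (mu w a (T0gen w x y z)).
Proof.
move=> HL a x y z; have wA := wanti HL; have ml := mu_lin HL a.
apply: (span_eq (y := half K *: T0g w (x, a * y, z) + half K *: T0g w (x, y, a * z)
   - half K *: T0g w (y * z, a, x))); last first.
  by apply: spanB; [apply: spanD|]; apply: spanZ; apply: span_gen.
rewrite /T0g /T0gen /= !(glD ml) !(glN ml) !(mu_w HL) !mulr1.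
wprep w wA; modsolve K ltac:(fun _ => ring).
Qed.

Lemma mu_T (K : fieldType) (A : comAlgType K) (L : lmodType K) (w : A -> A -> L) :
  is_ext_square w -> forall a x, span (T0g w) x -> span (T0g w) (mu w a x).
Proof.
move=> HL a x; apply: glspan_map; first exact: mu_lin.
by case=> [[u v] t]; apply: mu_T0gen.
Qed.

Lemma mu_add (K : fieldType) (A : comAlgType K) (L : lmodType K) (w : A -> A -> L) :
  is_ext_square w -> forall a b x, mu w (a + b) x = mu w a x + mu w b x.
Proof.
move=> HL a b; have wA := wanti HL.
apply: (ext_uniq HL); first exact: mu_lin.
  move=> k u v; rewrite !(glD (mu_lin HL _)) !(glZ (mu_lin HL _)).
  modsolve K ltac:(fun _ => ring).
move=> c e; rewrite !(mu_w HL) !mulrDl !(wDl HL) !(wDr HL).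
modsolve K ltac:(fun _ => ring).
Qed.

Lemma mu_one (K : fieldType) (A : comAlgType K) (L : lmodType K) (w : A -> A -> L) :
  (2%:R : K) != 0 -> is_ext_square w -> forall x, mu w 1 x = x.
Proof.
move=> two HL; apply: (ext_uniq HL (g2 := id)); first exact: mu_lin.
  by [].
move=> c e; rewrite !(mu_w HL) !mul1r /=.
modsolve K ltac:(fun _ => rewrite /half; field).
all: try exact two.
Qed.

Lemma mu_alg (K : fieldType) (A : comAlgType K) (L : lmodType K) (w : A -> A -> L) :
  (2%:R : K) != 0 -> is_ext_square w -> forall k x, mu w (k%:A) x = k *: x.
Proof.
move=> two HL k; apply: (ext_uniq HL (g2 := fun x => k *: x)); first exact: mu_lin.
  move=> l u v /=; modsolve K ltac:(fun _ => ring).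
move=> c e; rewrite !(mu_w HL) !mulr_algl !(wZl HL) !(wZr HL).
modsolve K ltac:(fun _ => rewrite /half; field).
all: try exact two.
Qed.

Lemma qpi_lin (R : pzRingType) (V : lmodType R) (X : Type) (g : X -> V) :
  glin (qpi g).
Proof. by move=> k x y; rewrite qpiD qpiZ. Qed.

Lemma mu_assoc (K : fieldType) (A : comAlgType K) (L : lmodType K) (w : A -> A -> L) :
  (2%:R : K) != 0 -> is_ext_square w -> forall a b x, span (T0g w) (mu w a (mu w b x) - mu w (a * b) x).
Proof.
move=> two HL a b x; have wA := wanti HL.
apply: qpi_eqP; move: x.
apply: (ext_uniq HL (g1 := fun x => qpi (T0g w) (mu w a (mu w b x)))
                   (g2 := fun x => qpi (T0g w) (mu w (a * b) x))).
- by move=> k u v /=; rewrite (mu_lin HL) (mu_lin HL) qpi_lin.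
- by move=> k u v /=; rewrite (mu_lin HL) qpi_lin.
move=> c e /=; apply: qpi_eq.
apply: (span_eq (y := (half K * half K) *: (T0g w (a * b, c, e) + T0g w (a, b, c * e)
   - T0g w (a, b * c, e) - T0g w (b, a * c, e)))); last first.
  by apply: spanZ; apply: spanB; [apply: spanB; [apply: spanD|]|]; apply: span_gen.
rewrite /T0g /T0gen /= !(mu_w HL) !(glZ (mu_lin HL _)) !(glD (mu_lin HL _)) !(mu_w HL).
wprep w wA; modsolve K ltac:(fun _ => rewrite /half; field).
all: try exact two.
Qed.

Definition quotA (K : fieldType) (A : comAlgType K) (L : lmodType K) (w : A -> A -> L)
  (HL : is_ext_square w) (two : (2%:R : K) != 0) : Type := quot (T0g w).

HB.instance Definition _ (K : fieldType) (A : comAlgType K) (L : lmodType K) (w : A -> A -> L)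
  (HL : is_ext_square w) (two : (2%:R : K) != 0) := GRing.Zmodule.on (quotA HL two).

Definition sA (K : fieldType) (A : comAlgType K) (L : lmodType K) (w : A -> A -> L)
  (HL : is_ext_square w) (two : (2%:R : K) != 0) (a : A) (q : quotA HL two) : quotA HL two :=
  qpi (T0g w) (mu w a (sval q)).

Lemma sAE (K : fieldType) (A : comAlgType K) (L : lmodType K) (w : A -> A -> L)
  (HL : is_ext_square w) (two : (2%:R : K) != 0) a x :
  @sA _ _ _ _ HL two a (qpi (T0g w) x) = qpi (T0g w) (mu w a x).
Proof.
apply: qpi_eq; rewrite -(glB (mu_lin HL a)).
by apply: (mu_T HL); apply: qvalP.
Qed.

Lemma sA_A (K : fieldType) (A : comAlgType K) (L : lmodType K) (w : A -> A -> L)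
  (HL : is_ext_square w) (two : (2%:R : K) != 0) a b (q : quotA HL two) :
  @sA _ _ _ _ HL two a (@sA _ _ _ _ HL two b q) = @sA _ _ _ _ HL two (a * b) q.
Proof.
case: (qpi_surj q) => x ->; rewrite !sAE; apply: qpi_eq; exact: mu_assoc.
Qed.

Lemma sA_1 (K : fieldType) (A : comAlgType K) (L : lmodType K) (w : A -> A -> L)
  (HL : is_ext_square w) (two : (2%:R : K) != 0) :
  left_id 1 (@sA _ _ _ _ HL two).
Proof. by move=> q; case: (qpi_surj q) => x ->; rewrite !sAE (mu_one two HL). Qed.

Lemma sA_Dr (K : fieldType) (A : comAlgType K) (L : lmodType K) (w : A -> A -> L)
  (HL : is_ext_square w) (two : (2%:R : K) != 0) :
  right_distributive (@sA _ _ _ _ HL two) +%R.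
Proof.
move=> a q r; case: (qpi_surj q) => x ->; case: (qpi_surj r) => y ->.
by rewrite -qpiD !sAE (glD (mu_lin HL a)) qpiD.
Qed.

Lemma sA_Dl (K : fieldType) (A : comAlgType K) (L : lmodType K) (w : A -> A -> L)
  (HL : is_ext_square w) (two : (2%:R : K) != 0) (q : quotA HL two) :
  {morph (@sA _ _ _ _ HL two)^~ q : a b / a + b}.
Proof.
move=> a b; case: (qpi_surj q) => x ->.
by rewrite !sAE (mu_add HL) qpiD.
Qed.

HB.instance Definition _ (K : fieldType) (A : comAlgType K) (L : lmodType K) (w : A -> A -> L)
  (HL : is_ext_square w) (two : (2%:R : K) != 0) :=
  GRing.Zmodule_isLmodule.Build A (quotA HL two) (@sA_A K A L w HL two) (@sA_1 K A L w HL two)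
    (@sA_Dr K A L w HL two) (@sA_Dl K A L w HL two).

Theorem lemma1p1 (K : fieldType) (two_unit : (2%:R : K) != 0)
    (A : comAlgType K)
    (L : lmodType K) (w : A -> A -> L) (HL : is_ext_square w)
    (Om : lmodType A) (d : A -> Om) (HOm : is_univ_diff d)
    (gamma : L -> Om)
    (gamma_lin : forall (k : K) (x y : L),
        gamma (k *: x + y) = (k%:A) *: gamma x + gamma y)
    (gamma_w : forall a b : A, gamma (w a b) = a *: d b - b *: d a) :
  (forall y : Om, exists x : L, gamma x = y) /\
  (forall x : L, gamma x = 0 <-> in_T0 w x).
Proof.
have wA := wanti HL.
have Hder : is_derivation d := HOm.1.
have dM : forall a b, d (a * b) = a *: d b + b *: d a := Hder.2.
have dl1 : d 1 = 0 := d1 Hder.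
have gl : glin (gamma : L -> restrK Om) := gamma_lin.
have gD : forall x y, gamma (x + y) = gamma x + gamma y := glD gl.
have gN : forall x, gamma (- x) = - gamma x := glN gl.
have gZ : forall (k : K) x, gamma (k *: x) = k%:A *: gamma x := glZ gl.
have gT : forall t, gamma (T0g w t) = 0.
  case=> [[a b] c]; rewrite /T0g /T0gen /= !gD !gN !gamma_w !dM dl1.
  modsolve A ltac:(fun _ => ring).
have ker1 : forall x, in_T0 w x -> gamma x = 0.
  by move=> x Hx; apply: (glspan gl gT Hx).
have hh : (half K)%:A + (half K)%:A = 1 :> A.
  by rewrite -scalerDl (_ : half K + half K = 1) ?scale1r // /half; field.
have h2 : forall v : Om, v = (half K)%:A *: ((1 + 1) *: v).
  by move=> v; rewrite scalerA mulrDr mulr1 hh scale1r.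
have gmu : forall a x, gamma (mu w a x) = a *: gamma x.
  move=> a; apply: (ext_uniq HL (M := restrK Om) (g1 := fun x => gamma (mu w a x))
                                      (g2 := fun x => a *: gamma x)).
  - by move=> k u v /=; rewrite (mu_lin HL) gamma_lin.
  - by move=> k u v /=; rewrite gamma_lin scalerDr scalerA mulrC -scalerA.
  move=> b c /=; rewrite (mu_w HL) gZ [RHS]h2; congr (_ *: _).
  rewrite !gD !gamma_w !dM.
  modsolve A ltac:(fun _ => ring).
pose QA := quotA HL two_unit.
pose Q := quot (T0g w).
have scQA : forall a x, (a *: (qpi (T0g w) x : QA) : QA) = qpi (T0g w) (mu w a x).
  exact: (sAE HL two_unit).
have adQA : forall x y, (qpi (T0g w) x : QA) + (qpi (T0g w) y : QA) = (qpi (T0g w) (x + y) : QA).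
  exact: qaddE.
have opQA : forall x, - (qpi (T0g w) x : QA) = (qpi (T0g w) (- x) : QA).
  exact: qoppE.
have surjQA : forall q : QA, exists x, q = qpi (T0g w) x.
  exact: qpi_surj.
pose D : A -> QA := fun b => qpi (T0g w) (w 1 b).
have HD : is_derivation D.
  split.
    move=> k a b; rewrite /D scQA adQA (mu_alg two_unit HL) (wDr HL) (wZr HL).
    by [].
  move=> a b; rewrite /D !scQA adQA !(mu_w HL) !mulr1; congr qpi.
  wprep w wA; modsolve K ltac:(fun _ => rewrite /half; field).
  all: try exact two_unit.
have [[psi [psiA psiD]] _] := HOm.2 QA D HD.
have qKA : forall (k : K) (q : QA), (k%:A *: q : QA) = (k *: (q : Q) : Q).
  move=> k q; case: (surjQA q) => x ->.
  by rewrite scQA (mu_alg two_unit HL) qpiZ.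
have C1 : forall x, (psi (gamma x) : Q) = qpi (T0g w) x.
  apply: (ext_uniq HL (M := Q) (g1 := fun x => (psi (gamma x) : Q)) (g2 := qpi (T0g w))).
  - by move=> k u v /=; rewrite gamma_lin psiA qKA.
  - exact: qpi_lin.
  move=> b c /=; rewrite gamma_w (glB psiA) !(glZ psiA) !psiD /D !scQA opQA adQA.
  congr qpi; rewrite !(mu_w HL) !mulr1.
  wprep w wA; modsolve K ltac:(fun _ => rewrite /half; field).
  all: try exact two_unit.
have gq : forall z, gamma (sval (qpi (T0g w) z)) = gamma z.
  move=> z; have := ker1 _ (qvalP (T0g w) z).
  by rewrite gD gN => /eqP; rewrite subr_eq0 => /eqP.
pose gbar : QA -> Om := fun q => gamma (sval q).
have gbarA : Alinear gbar.
  move=> a q r; case: (surjQA q) => x ->; case: (surjQA r) => y ->.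
  by rewrite scQA adQA /gbar !gq gD gmu.
have E : forall y, y = gbar (psi y).
  apply: (univ_uniq HOm (M := Om) (f1 := id) (f2 := fun y => gbar (psi y))).
  - by [].
  - by move=> a u v /=; rewrite psiA gbarA.
  by move=> a /=; rewrite psiD /D /gbar gq gamma_w dl1 scaler0 subr0 scale1r.
split.
  by move=> y; exists (sval (psi y)); rewrite [RHS]E.
move=> x; split; last exact: ker1.
move=> Hx; have := C1 x; rewrite Hx (gl0 psiA) => E0.
have E1 : qpi (T0g w) 0 = qpi (T0g w) x by exact: E0.
have := qpi_eqP E1; rewrite sub0r => /spanN; rewrite opprK.
by [].
Qed.
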